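(* For every integer $n \geq 11$ and every integer $k$ with $5\le k\le n+1$, there exists a separating union-closed family $\mathcal{A}^{(k)}$ with base set $[n]$, height $h=k$ and $|\mathcal{B}(\mathcal{A}^{(k)})|=1$ such that \[\mathrm{Avg}(\mathcal{A}^{(k)}) = \frac{\sum_{A \in \mathcal{A}^{(k)}}|A|}{|\mathcal{A}^{(k)}|} < \frac{n}{2}.\]
   Context: A family of sets $\mathcal{A}$ is union-closed if it is a finite family of distinct finite sets with at least one nonempty member set, and $X,Y\in\mathcal{A}$ implies $X\cup Y\in\mathcal{A}$ (the empty set may be a member). For a family $\mathcal{F}$, $b(\mathcal{F})=\bigcup_{F\in\mathcal{F}}F$; the base set $b(\mathcal{A})$ is denoted $[n]=\{1,\dots,n\}$. $\mathcal{A}$ is separating if for any two distinct $x,y\in[n]$ there is $A\in\mathcal{A}$ containing exactly one of $x,y$. A chain in $\mathcal{A}$ is a subfamily any two distinct members of which are comparable under proper inclusion; the height $h$ of $\mathcal{A}$ is the maximum size of a chain in $\mathcal{A}$. For real $x\ge 0$, $\mathcal{A}_{<x}=\{A\in\mathcal{A} : |A|<x\}$. For $\mathcal{S}\subseteq\mathcal{A}$ and $S\in\mathcal{S}$, $\mathrm{irr}_{\mathcal{S}}(S)=\{s\in S : s\notin b(\mathcal{S}\setminus\{S\})\}$, and $\mathcal{S}$ is irredundant if $\mathrm{irr}_{\mathcal{S}}(S)\neq\emptyset$ for every $S\in\mathcal{S}$. Set $B=b(\mathcal{A}_{<n/2})$, and let $\mathcal{B}(\mathcal{A})$ denote any irredundant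 subfamily of $\mathcal{A}_{<n/2}$ of minimum size such that $b(\mathcal{B}(\mathcal{A}))=B$. *)

(* Defs.v *)
(* Families of subsets of [n] are modelled as
   F : {set {set 'I_n}} (the ground set {0,..,n-1} plays the role of [n]). *)
From mathcomp Require Import all_boot all_order all_algebra.
Set Implicit Arguments. Unset Strict Implicit. Unset Printing Implicit Defensive.

Section Families.
Variable n : nat.
Notation fam := {set {set 'I_n}}.

Definition base (F : fam) : {set 'I_n} := cover F.

Definition union_closed (F : fam) : Prop :=
  (exists2 X, X \in F & X != set0) /\
  (forall X Y, X \in F -> Y \in F -> X :|: Y \in F).

Definition separating (F : fam) : Prop :=
  forall x y : 'I_n, x != y -> exists2 A, A \in F & (x \in A) != (y \in A).

Definition is_chain (C : fam) : bool :=
  [forall X in C, forall Y in C, (X != Y) ==> ((X \proper Y) || (Y \proper X))].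

Definition height (F : fam) : nat :=
  \max_(C in powerset F | is_chain C) #|C|.

Definition small_part (F : fam) : fam := [set A in F | 2 * #|A| < n].

Definition irr (SS : fam) (S : {set 'I_n}) : {set 'I_n} := S :\: base (SS :\ S).

Definition irredundant (SS : fam) : Prop :=
  forall S, S \in SS -> irr SS S != set0.

Definition calB_candidate (F SS : fam) : Prop :=
  SS \subset small_part F /\ irredundant SS /\ base SS = base (small_part F).

(* SS is a (choice of) B(A): a candidate of minimum size *)
Definition is_calB (F SS : fam) : Prop :=
  calB_candidate F SS /\ (forall SS', calB_candidate F SS' -> #|SS| <= #|SS'|).

Definition avg (F : fam) : rat :=
  (\sum_(A in F) #|A|)%:R / #|F|%:R.

End Families.

(* Main.v *)
Require Import Defs.
From mathcomp Require Import all_boot all_order all_algebra.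
From mathcomp Require Import zify.
Import GRing.Theory Num.Theory.
Set Implicit Arguments. Unset Strict Implicit. Unset Printing Implicit Defensive.

Lemma count_lt_iota c N : count (fun i => i < c) (iota 0 N) = minn c N.
Proof.
elim: N => [|N IH]; first by rewrite minn0.
rewrite -addn1 iotaD count_cat IH /= add0n addn0.
case: (ltnP N c) => h /=; lia.
Qed.

Lemma count_split lo hi s : lo <= hi ->
  count (fun i => i < hi) s = count (fun i => i < lo) s + count (fun i => (lo <= i) && (i < hi)) s.
Proof.
move=> h; elim: s => [|x s IH] //=; rewrite IH.
case: (ltnP x lo) => h1; case: (ltnP x hi) => h2 /=; lia.
Qed.

Lemma count_int lo hi N : lo <= hi -> hi <= N ->
  count (fun i => (lo <= i) && (i < hi)) (iota 0 N) = hi - lo.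
Proof.
move=> h1 h2; have := count_split (iota 0 N) h1.
rewrite !count_lt_iota; lia.
Qed.

Lemma card_ord_pred N (Q : pred nat) : #|[set x : 'I_N | Q x]| = count Q (iota 0 N).
Proof.
rewrite -val_enum_ord count_map cardsE cardE enumT.
rewrite /enum_mem size_filter; apply: eq_in_count => x _ /=. by rewrite unfold_in.
Qed.

Lemma sum_sub_le (T : finType) (A B : {set T}) (f : T -> nat) : A \subset B ->
  \sum_(x in A) f x <= \sum_(x in B) f x.
Proof.
move=> sAB; rewrite [X in _ <= X](big_setID A) /=.
by rewrite (setIidPr sAB) leq_addr.
Qed.

Lemma sum_U_le (T : finType) (A B : {set T}) (f : T -> nat) :
  \sum_(x in A :|: B) f x <= \sum_(x in A) f x + \sum_(x in B) f x.
Proof.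
rewrite (big_setID A) /=; apply: leq_add; apply: sum_sub_le; apply/subsetP => x;
  rewrite !inE; case: (x \in A) => //=; rewrite ?andbF // orbF.
Qed.

Lemma sum_imset_le (I T : finType) (D : {set I}) (h : I -> T) (g : T -> nat) :
  \sum_(j in h @: D) g j <= \sum_(i in D) g (h i).
Proof.
rewrite (partition_big_imset h); apply: leq_sum => j /imsetP [i Di ->].
by rewrite (bigD1 i) /= ?Di ?eqxx // leq_addr.
Qed.

Lemma bin2x m : 'C(m, 2) * 2 = m * m.-1.
Proof.
elim: m => [|m IH] //; rewrite binS bin1 mulnDl IH; case: m {IH} => //= m; lia.
Qed.

Definition Pset n (i : nat) : {set 'I_n} := [set x : 'I_n | x < i].
Definition Qset n (y : nat) : {set 'I_n} := [set x : 'I_n | val x != y].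
Definition mm n := (n.-1)./2.
Definition aa n k := mm n + 3 - k.
Definition pp n k := maxn (mm n) (k - 3).
Definition Small n k : {set {set 'I_n}} :=
  [set A : {set 'I_n} | (A \subset Pset n (mm n)) && (aa n k <= #|A|)].
Definition Imid n k : {set 'I_n.+1} := [set i : 'I_n.+1 | (mm n < i) && (i <= pp n k)].
Definition Icmp n k : {set 'I_n.+1} := [set i : 'I_n.+1 | (pp n k <= i) && (i <= n - 2)].
Definition Fam n k : {set {set 'I_n}} :=
  Small n k :|: ((fun i : 'I_n.+1 => Pset n i) @: Imid n k)
            :|: ((fun i : 'I_n.+1 => Qset n i) @: Icmp n k) :|: [set setT].

Lemma params n k : 11 <= n -> 5 <= k <= n.+1 ->
  [/\ (mm n).*2 < n, n <= (mm n).+1.*2, 5 <= mm n, aa n k <= mm n - 2 &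
      [/\ mm n <= pp n k, pp n k <= n - 2 & k = pp n k + 3 - aa n k]].
Proof.
move=> hn /andP[hk1 hk2].
have h := odd_double_half n.-1.
rewrite /aa /pp; rewrite -/(mm n) in h *.
move: (mm n) h => m h.
case: (odd n.-1) h => /= h; move: h; rewrite -!muln2 => h; (repeat split); lia.
Qed.

Lemma card_Pset n i : i <= n -> #|Pset n i| = i.
Proof.
move=> h; rewrite /Pset (@card_ord_pred n (fun y => y < i)).
have := count_int (lo:=0) (hi:=i) (N:=n) (leq0n _) h.
rewrite subn0 => e; rewrite -[X in _ = X]e; by apply: eq_count => x.
Qed.

Lemma card_Qset n y : y < n -> #|Qset n y| = n.-1.
Proof.
move=> h; rewrite /Qset (@card_ord_pred n (fun x => x != y)).
have := count_predC (pred1 y) (iota 0 n).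
rewrite size_iota count_uniq_mem ?iota_uniq // mem_iota /= h.
have -> : count (predC (pred1 y)) (iota 0 n) = count (fun x => x != y) (iota 0 n) by [].
lia.
Qed.

Lemma Pset_sub n i j : i <= j -> Pset n i \subset Pset n j.
Proof. by move=> h; apply/subsetP => x; rewrite !inE => /leq_trans; apply. Qed.

Lemma Pset_Qset n i y : i <= y -> Pset n i \subset Qset n y.
Proof.
move=> h; apply/subsetP => x; rewrite !inE => hx; apply/eqP => e.
by move: hx; rewrite e ltnNge h.
Qed.

Lemma inFamP n k (A : {set 'I_n}) : A \in Fam n k <->
  [\/ (A \subset Pset n (mm n)) && (aa n k <= #|A|),
      exists2 i : 'I_n.+1, (mm n < i) && (i <= pp n k) & A = Pset n i,
      exists2 y : 'I_n.+1, (pp n k <= y) && (y <= n - 2) & A = Qset n y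
    | A = setT].
Proof.
rewrite /Fam !inE; split.
  case/orP => [/orP [/orP [h|/imsetP [i hi ->]]|/imsetP [i hi ->]]|/eqP ->].
  - by constructor 1.
  - by constructor 2; exists i; rewrite // -(in_set (fun i : 'I_n.+1 => (mm n < i) && (i <= pp n k))).
  - by constructor 3; exists i; rewrite // -(in_set (fun i : 'I_n.+1 => (pp n k <= i) && (i <= n - 2))).
  - by constructor 4.
case=> [h|[i hi ->]|[y hy ->]|->]; rewrite ?eqxx ?orbT //.
- by rewrite h.
- by rewrite (imset_f (fun i : 'I_n.+1 => Pset n i)) ?orbT // inE.
- by rewrite (imset_f (fun i : 'I_n.+1 => Qset n i)) ?orbT // inE.
Qed.

Definition smallb n k (A : {set 'I_n}) := (A \subset Pset n (mm n)) && (aa n k <= #|A|).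

Section P3.
Lemma PinF n k i : 11 <= n -> 5 <= k <= n.+1 -> aa n k <= i <= pp n k -> Pset n i \in Fam n k.
Proof.
move=> hn hk /andP [h1 h2]; have [e1 e2 e3 e4 [e5 e6 e7]] := params hn hk.
apply/inFamP; case: (leqP i (mm n)) => h3.
  apply: Or41; rewrite Pset_sub //= card_Pset //; lia.
have hi : i < n.+1 by lia.
apply: Or42; exists (inord i); rewrite inordK //; lia.
Qed.

Lemma QinF n k y : 11 <= n -> 5 <= k <= n.+1 -> pp n k <= y <= n - 2 -> Qset n y \in Fam n k.
Proof.
move=> hn hk /andP [h1 h2]; have [e1 e2 e3 e4 [e5 e6 e7]] := params hn hk.
have hi : y < n.+1 by lia.
apply/inFamP; apply: Or43; exists (inord y); rewrite inordK //; lia.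
Qed.

Lemma TinF n k : setT \in Fam n k.
Proof. by apply/inFamP; apply: Or44. Qed.

Lemma famcmp n k X Y : 11 <= n -> 5 <= k <= n.+1 -> X \in Fam n k -> Y \in Fam n k ->
  [\/ smallb k X && smallb k Y, X \subset Y, Y \subset X | X :|: Y = setT].
Proof.
move=> hn hk; have [e1 e2 e3 e4 [e5 e6 e7]] := params hn hk.
have lowQ : forall (Z : {set 'I_n}) (y : nat), Z \subset Pset n (pp n k) -> pp n k <= y ->
   Z \subset Qset n y.
  by move=> Z y hZ hy; apply: subset_trans hZ (Pset_Qset _ hy).
have smlow : forall Z : {set 'I_n}, smallb k Z -> Z \subset Pset n (pp n k).
  by move=> Z /andP [hZ _]; apply: subset_trans hZ (Pset_sub _ e5).
have smP : forall (Z : {set 'I_n}) (i : nat), smallb k Z -> mm n < i -> Z \subset Pset n i.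
  by move=> Z i /andP [hZ _] hi; apply: subset_trans hZ (Pset_sub _ (ltnW hi)).
move/inFamP => [hX|[i /andP [hi1 hi2] ->]|[y /andP [hy1 hy2] ->]|->];
move/inFamP => [hY|[j /andP [hj1 hj2] ->]|[z /andP [hz1 hz2] ->]|->];
  try by [apply: Or42; apply: subsetT | apply: Or43; apply: subsetT].
- by apply: Or41; rewrite /smallb hX hY.
- by apply: Or42; apply: smP.
- by apply: Or42; apply: lowQ => //; apply: smlow.
- by apply: Or43; apply: smP.
- by case: (leqP i j) => h; [apply: Or42 | apply: Or43]; apply: Pset_sub => //; apply: ltnW.
- by apply: Or42; apply: lowQ => //; apply: Pset_sub.
- by apply: Or43; apply: lowQ => //; apply: smlow.
- by apply: Or43; apply: lowQ => //; apply: Pset_sub.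
- case: (eqVneq (val y) (val z)) => h; first by apply: Or42; rewrite h.
  apply: Or44; apply/setP => x; rewrite !inE; apply/orP.
  by case: (eqVneq (val x) (val y)) => [e|]; [right; rewrite e | left].
Qed.

Lemma fam_uc n k : 11 <= n -> 5 <= k <= n.+1 -> union_closed (Fam n k).
Proof.
move=> hn hk; split.
  exists setT; first exact: TinF.
  by apply/eqP => /setP /(_ (Ordinal (leq_trans (isT : 0 < 11) hn))); rewrite !inE.
move=> X Y hX hY; case: (famcmp hn hk hX hY).
- case/andP => /andP [h1 h2] /andP [h3 h4]; apply/inFamP; apply: Or41.
  rewrite subUset h1 h3 /=; apply: leq_trans h2 (subset_leq_card (subsetUl X Y)).
- by move/setUidPr ->.
- by move/setUidPl ->.
- by move->; apply: TinF.
Qed.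
End P3.

Lemma fam_base n k : 11 <= n -> 5 <= k <= n.+1 -> base (Fam n k) = setT.
Proof.
move=> hn hk; apply/eqP; rewrite eqEsubset subsetT /=.
exact: (bigcup_sup setT (TinF n k)).
Qed.

Lemma sep_lt n k (x y : 'I_n) : 11 <= n -> 5 <= k <= n.+1 -> x < y ->
  exists2 A, A \in Fam n k & (x \in A) != (y \in A).
Proof.
move=> hn hk hxy; have [e1 e2 e3 e4 [e5 e6 e7]] := params hn hk.
have yn := ltn_ord y.
case: (ltnP y (mm n)) => h1.
  exists (Pset n (mm n) :\ y).
    apply/inFamP; apply: Or41; rewrite subD1set /=.
    have := cardsD1 y (Pset n (mm n)); rewrite card_Pset; last lia.
    rewrite inE h1 add1n => hc; rewrite -ltnS -hc; lia.
  by rewrite !inE eqxx /= neq_ltn hxy (ltn_trans hxy h1).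
case: (leqP y (pp n k)) => h2.
  exists (Pset n y); first by apply: PinF => //; lia.
  by rewrite !inE hxy ltnn.
case: (leqP y (n - 2)) => h3.
  exists (Qset n y); first by apply: QinF => //; lia.
  by rewrite !inE eqxx (ltn_eqF hxy).
case: (leqP (pp n k) x) => h4.
  exists (Qset n x); first by apply: QinF => //; lia.
  by rewrite !inE eqxx (gtn_eqF hxy).
exists (Pset n (pp n k)); first by apply: PinF => //; lia.
by rewrite !inE h4 ltnNge (ltnW h2).
Qed.

Lemma fam_sep n k : 11 <= n -> 5 <= k <= n.+1 -> separating (Fam n k).
Proof.
move=> hn hk x y hxy; case: (ltngtP x y) => h.
- exact: sep_lt.
- by have [A hA hA2] := sep_lt hn hk h; exists A; rewrite // eq_sym.
- by move: hxy; rewrite (val_inj h) eqxx.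
Qed.

Lemma card_setT_ord n : #|[set: 'I_n]| = n.
Proof. by rewrite cardsT card_ord. Qed.

Lemma card_fam n k A : 11 <= n -> 5 <= k <= n.+1 -> A \in Fam n k ->
  #|A| \in iota (aa n k) ((pp n k).+1 - aa n k) ++ [:: n.-1; n].
Proof.
move=> hn hk; have [e1 e2 e3 e4 [e5 e6 e7]] := params hn hk.
move/inFamP; rewrite mem_cat mem_iota !inE; move=> [/andP [h1 h2]|[i /andP [hi1 hi2] ->]|[y /andP [hy1 hy2] ->]|->].
- have := subset_leq_card h1; rewrite card_Pset; last lia.
  move=> h3; apply/orP; left; apply/andP; split => //; lia.
- rewrite card_Pset; last lia; apply/orP; left; apply/andP; split; lia.
- by rewrite card_Qset ?eqxx ?orbT //; lia.
- by rewrite card_setT_ord eqxx !orbT.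
Qed.

Lemma chain_le n k (C : {set {set 'I_n}}) : 11 <= n -> 5 <= k <= n.+1 ->
  C \subset Fam n k -> is_chain C -> #|C| <= k.
Proof.
move=> hn hk hC hch; have [e1 e2 e3 e4 [e5 e6 e7]] := params hn hk.
set t := iota (aa n k) ((pp n k).+1 - aa n k) ++ [:: n.-1; n].
have -> : k = size t by rewrite size_cat size_iota /=; lia.
rewrite cardE -(size_map (fun A : {set 'I_n} => #|A|)).
apply: uniq_leq_size.
  rewrite map_inj_in_uniq ?enum_uniq // => A B; rewrite !mem_enum => hA hB e.
  apply/eqP; apply/negPn/negP => neq.
  move/forallP/(_ A): hch; rewrite hA /= => /forallP/(_ B); rewrite hB neq /=.
  by case/orP => /proper_card; rewrite e ltnn.
move=> z /mapP [A]; rewrite mem_enum => hA ->.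
by apply: card_fam => //; apply: (subsetP hC).
Qed.

Definition gch n k (t : nat) : {set 'I_n} :=
  if t <= pp n k - aa n k then Pset n (aa n k + t)
  else if t == (pp n k - aa n k).+1 then Qset n (n - 2) else setT.

Lemma chain_ex n k : 11 <= n -> 5 <= k <= n.+1 ->
  exists2 C : {set {set 'I_n}}, (C \in powerset (Fam n k)) && is_chain C & #|C| = k.
Proof.
move=> hn hk; have [e1 e2 e3 e4 [e5 e6 e7]] := params hn hk.
pose g := fun t : 'I_k => gch n k t.
have cgE : forall t : 'I_k, #|g t| = (if t <= pp n k - aa n k then aa n k + t
     else if val t == (pp n k - aa n k).+1 then n.-1 else n).
  move=> t; rewrite /g /gch; case: ifP => h1.
    rewrite card_Pset //; lia.
  case: ifP => h2; first by rewrite card_Qset //; lia.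
  exact: card_setT_ord.
have mono : forall t1 t2 : 'I_k, t1 <= t2 -> g t1 \subset g t2.
  move=> t1 t2 h; rewrite /g /gch.
  case: (leqP t1 (pp n k - aa n k)) => h1; case: (leqP t2 (pp n k - aa n k)) => h2.
  - by apply: Pset_sub; lia.
  - case: (@eqP _ (nat_of_ord t2) (pp n k - aa n k).+1) => h3; last exact: subsetT.
    by apply: Pset_Qset; lia.
  - lia.
  - case: (@eqP _ (nat_of_ord t1) (pp n k - aa n k).+1) => h3;
    case: (@eqP _ (nat_of_ord t2) (pp n k - aa n k).+1) => h4; rewrite ?subsetT ?subxx //.
    lia.
have ginj : injective g.
  move=> t1 t2 e0; have := congr1 (fun A : {set 'I_n} => #|A|) e0; rewrite /= !cgE => e.
  apply: val_inj => /=; have := ltn_ord t1; have := ltn_ord t2.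
  move: e; case: (leqP t1 (pp n k - aa n k)) => h1; case: (leqP t2 (pp n k - aa n k)) => h2;
  case: (@eqP _ (nat_of_ord t1) (pp n k - aa n k).+1) => h3;
  case: (@eqP _ (nat_of_ord t2) (pp n k - aa n k).+1) => h4; lia.
exists (g @: setT).
  apply/andP; split.
    rewrite powersetE; apply/subsetP => X /imsetP [t _ ->]; rewrite /g /gch.
    have := ltn_ord t => ht.
    case: ifP => h1; first by apply: PinF => //; lia.
    case: ifP => h2; first by apply: QinF => //; lia.
    exact: TinF.
  apply/forallP => X; apply/implyP => /imsetP [t1 _ ->].
  apply/forallP => Y; apply/implyP => /imsetP [t2 _ ->].
  apply/implyP => neq; case: (leqP t1 t2) => h.
    by rewrite properEneq neq mono.
  by rewrite orbC properEneq eq_sym neq mono // ltnW.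
by rewrite card_imset // card_setT_ord.
Qed.

Lemma fam_height n k : 11 <= n -> 5 <= k <= n.+1 -> height (Fam n k) = k.
Proof.
move=> hn hk; apply/eqP; rewrite eqn_leq; apply/andP; split.
  apply/bigmax_leqP => C /andP [hC hch]; apply: chain_le => //.
  by rewrite -powersetE.
have [C hC hCk] := chain_ex hn hk.
rewrite -[X in X <= _]hCk /height; exact: (leq_bigmax_cond C hC).
Qed.

Lemma smallF n k A : 11 <= n -> 5 <= k <= n.+1 -> A \in Fam n k -> 2 * #|A| < n ->
  A \subset Pset n (mm n).
Proof.
move=> hn hk; have [e1 e2 e3 e4 [e5 e6 e7]] := params hn hk.
move: e1 e2; rewrite -!muln2 => e1 e2.
move/inFamP => [/andP [h1 h2]|[i /andP [hi1 hi2] ->]|[y /andP [hy1 hy2] ->]|->] //.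
- rewrite card_Pset; lia.
- rewrite card_Qset; lia.
- rewrite card_setT_ord; lia.
Qed.

Lemma Pm_neq0 n : 11 <= n -> Pset n (mm n) != set0.
Proof.
move=> hn; apply/eqP => e.
have h := odd_double_half n.-1; rewrite -/(mm n) in h; move: h; rewrite -muln2 => h.
have : mm n <= n by case: (odd n.-1) h => /= h; lia.
move/card_Pset; rewrite e cards0.
by case: (odd n.-1) h => /= h; lia.
Qed.

Lemma fam_calB n k : 11 <= n -> 5 <= k <= n.+1 ->
  exists SS, is_calB (Fam n k) SS /\ #|SS| = 1.
Proof.
move=> hn hk; have [e1 e2 e3 e4 [e5 e6 e7]] := params hn hk.
move: (e1); rewrite -!muln2 => e1'.
have Sin : Pset n (mm n) \in small_part (Fam n k).
  rewrite inE PinF //=; last lia.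
  rewrite card_Pset; lia.
have bsp : base (small_part (Fam n k)) = Pset n (mm n).
  apply/eqP; rewrite eqEsubset; apply/andP; split.
    apply/bigcupsP => A; rewrite inE => /andP [hA h2]; exact: smallF hA h2.
  exact: (bigcup_sup _ Sin).
have hne := Pm_neq0 hn.
exists [set Pset n (mm n)]; split; last exact: cards1.
split.
  split; first by rewrite sub1set.
  split; last by rewrite bsp /base cover1.
  move=> S; rewrite inE => /eqP ->; rewrite /irr setDv /base /cover big_set0 setD0 //.
move=> SS' [_ [_ hb]]; rewrite cards1 card_gt0; apply/eqP => e.
by move: hb; rewrite e bsp /base /cover big_set0 => e'; move: hne; rewrite -e' eqxx.
Qed.

Lemma sum_Y n (B : {set 'I_n}) j (f : {set 'I_n} -> nat) c :
  (forall A : {set 'I_n}, #|A| = j -> f A = c) ->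
  \sum_(A in [set A : {set 'I_n} | A \subset B & #|A| == j]) f A = 'C(#|B|, j) * c.
Proof.
move=> hf; rewrite -cards_draws -sum_nat_const; apply: eq_bigr => A.
by rewrite inE => /andP [_ /eqP /hf].
Qed.

Lemma card_Imid n k : 11 <= n -> 5 <= k <= n.+1 -> #|Imid n k| = pp n k - mm n.
Proof.
move=> hn hk; have [e1 e2 e3 e4 [e5 e6 e7]] := params hn hk.
rewrite /Imid (@card_ord_pred n.+1 (fun i => (mm n < i) && (i <= pp n k))).
rewrite -subSS -(@count_int (mm n).+1 (pp n k).+1 n.+1); try lia.
by apply: eq_count => i.
Qed.

Lemma card_Icmp n k : 11 <= n -> 5 <= k <= n.+1 -> #|Icmp n k| = n.-1 - pp n k.
Proof.
move=> hn hk; have [e1 e2 e3 e4 [e5 e6 e7]] := params hn hk.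
rewrite /Icmp (@card_ord_pred n.+1 (fun i => (pp n k <= i) && (i <= n - 2))).
rewrite -(@count_int (pp n k) n.-1 n.+1); try lia.
apply: eq_count => i /=; congr (_ && _); lia.
Qed.

Lemma avg_nat n k : 11 <= n -> 5 <= k <= n.+1 ->
  \sum_(A in Fam n k) #|A| * 2 < n * #|Fam n k|.
Proof.
move=> hn hk; have [e1 e2 e3 e4 [e5 e6 e7]] := params hn hk.
move: e1 e2; rewrite -!muln2 => e1 e2.
pose e := fun A : {set 'I_n} => #|A| * 2 - n.
pose d := fun A : {set 'I_n} => n - #|A| * 2.
have key : \sum_(A in Fam n k) (#|A| * 2 + d A) = \sum_(A in Fam n k) (n + e A).
  by apply: eq_bigr => A _; rewrite /d /e; lia.
rewrite !big_split /= sum_nat_const in key.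
suff h : \sum_(A in Fam n k) e A < \sum_(A in Fam n k) d A.
  by rewrite -(ltn_add2r (\sum_(A in Fam n k) d A)) key mulnC ltn_add2l.
set m := mm n in e1 e2 e3 e4 e5 *.
set Y2 := [set A : {set 'I_n} | A \subset Pset n m & #|A| == m - 2].
set Y1 := [set A : {set 'I_n} | A \subset Pset n m & #|A| == m - 1].
have cPm : #|Pset n m| = m by apply: card_Pset; lia.
have hY : Y2 :|: Y1 \subset Fam n k.
  apply/subsetP => A hA; apply/inFamP; apply: Or41; rewrite -/m.
  by move: hA; rewrite !inE => /orP [] /andP [h1 /eqP h2]; rewrite h1 h2 /=; lia.
have lowD : 'C(m, 2) * (n - (m - 2) * 2) + m * (n - (m - 1) * 2) <= \sum_(A in Fam n k) d A.
  apply: leq_trans (sum_sub_le d hY); rewrite (big_setID Y2) /= setUK.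
  apply: leq_add.
    rewrite (@sum_Y _ _ _ _ (n - (m - 2) * 2)); last by move=> A hA; rewrite /d hA.
    by rewrite cPm bin_sub; [|lia].
  apply: leq_trans (sum_sub_le d (_ : Y1 \subset (Y2 :|: Y1) :\: Y2)).
    rewrite (@sum_Y _ _ _ _ (n - (m - 1) * 2)); last by move=> A hA; rewrite /d hA.
    by rewrite cPm bin_sub ?bin1; [|lia].
  apply/subsetP => A; rewrite !inE => /andP [h1 h2]; rewrite h1 h2 orbT andbT /=.
  by move: h2 => /eqP ->; apply/eqP; lia.
have upE : \sum_(A in Fam n k) e A <= (n.-1 - m) * (n - 2) + n.
  rewrite /Fam.
  apply: leq_trans (sum_U_le _ _ _) _; rewrite big_set1 /e card_setT_ord.
  rewrite [X in _ <= X + _](_ : _ = (pp n k - m) * (n - 2) + (n.-1 - pp n k) * (n - 2)); last first.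
    by rewrite -mulnDl; congr (_ * _); lia.
  apply: leq_add; last lia.
  apply: leq_trans (sum_U_le _ _ _) _; apply: leq_add; last first.
    apply: leq_trans (sum_imset_le _ _ _) _.
    rewrite -(card_Icmp hn hk) -sum_nat_const; apply: leq_sum => y.
    rewrite inE => /andP [h1 h2]; rewrite card_Qset; lia.
  apply: leq_trans (sum_U_le _ _ _) _.
  rewrite [X in X + _ <= _]big1 ?add0n; last first.
    move=> A; rewrite inE => /andP [h1 _]; have := subset_leq_card h1.
    rewrite card_Pset; lia.
  apply: leq_trans (sum_imset_le _ _ _) _.
  rewrite -(card_Imid hn hk) -sum_nat_const; apply: leq_sum => i.
  rewrite inE => /andP [h1 h2]; rewrite card_Pset; lia.
apply: leq_trans lowD; apply: leq_ltn_trans upE _.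
have c2 := bin2x m.
have hm1 : m.-1 = m - 1 by lia.
rewrite hm1 in c2.
have h := odd_double_half n.-1; rewrite -/(mm n) -/m -muln2 in h.
case: (odd n.-1) h => /= h.
- have -> : n = m * 2 + 2 by lia.
  rewrite (_ : (m * 2 + 2).-1 - m = m + 1); last lia.
  rewrite (_ : m * 2 + 2 - 2 = m * 2); last lia.
  rewrite (_ : m * 2 + 2 - (m - 2) * 2 = 6); last lia.
  rewrite (_ : m * 2 + 2 - (m - 1) * 2 = 4); last lia.
  nia.
- have -> : n = m * 2 + 1 by lia.
  rewrite (_ : (m * 2 + 1).-1 - m = m); last lia.
  rewrite (_ : m * 2 + 1 - 2 = m * 2 - 1); last lia.
  rewrite (_ : m * 2 + 1 - (m - 2) * 2 = 5); last lia.
  rewrite (_ : m * 2 + 1 - (m - 1) * 2 = 3); last lia.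
  nia.
Qed.

Unset Implicit Arguments.

Theorem theorem3p2 :
  forall n k : nat, 11 <= n -> 5 <= k <= n.+1 ->
  exists F : {set {set 'I_n}},
    [/\ union_closed F,
        base F = [set: 'I_n],
        separating F,
        height F = k &
        (exists SS, is_calB F SS /\ #|SS| = 1)] /\
    (avg F < n%:R / 2%:R :> rat)%R.
Proof.
move=> n k hn hk; exists (Fam n k); split.
  split; [exact: fam_uc | exact: fam_base | exact: fam_sep | exact: fam_height | exact: fam_calB].
have hF : 0 < #|Fam n k| by rewrite card_gt0; apply/set0Pn; exists setT; exact: TinF.
rewrite /avg ltr_pdivrMr ?ltr0n // mulrAC ltr_pdivlMr ?ltr0n // -!natrM ltr_nat.
rewrite big_distrl /=; exact: avg_nat.
Qed.
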